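(* Suppose $k,K,A,B,n$ are natural numbers such that $\mathrm{LT}(K,n)\leq A$ and $\mathrm{LCS}_2(K,\mathcal P_k)\leq B$. Then $\mathrm{LT}(k,kn)\leq(2n-1)B+kA$.
   Context: $[k]=\{1,\dots,k\}$. Two subsequences of a word $w$ are twins if they are equal as words and use disjoint sets of positions of $w$; $\mathrm{LT}(w)$ is the maximum length of twins in $w$, and $\mathrm{LT}(k,n)=\min_{w\in[k]^n}\mathrm{LT}(w)$. $\mathcal{P}_k$ is the set of permutations on $k$ letters (words over $[k]$ with each letter exactly once). $\mathrm{LCS}(w,w')$ is the length of a longest common subsequence of $w,w'$; $\mathrm{LCS}_2(K,\mathcal P_k)$ is the minimum, over sets of $K$ distinct permutations in $\mathcal P_k$, of the maximum $\mathrm{LCS}$ of two distinct members. *)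

(* Defs.v *)
From mathcomp Require Import all_boot all_order all_fingroup.
Set Implicit Arguments. Unset Strict Implicit. Unset Printing Implicit Defensive.

(* Letters [k] = {1..k} are represented by 'I_k = {0..k-1}. *)

Definition word (k n : nat) := {ffun 'I_n -> 'I_k}.

Definition subw (k n : nat) (w : word k n) (S : {set 'I_n}) : seq 'I_k :=
  [seq w i | i <- enum S].

Definition twins (k n : nat) (w : word k n) (S T : {set 'I_n}) : bool :=
  [disjoint S & T] && (subw w S == subw w T).

Definition LTw (k n : nat) (w : word k n) : nat :=
  \max_(ST : {set 'I_n} * {set 'I_n} | twins w ST.1 ST.2) #|ST.1|.

(* LT(k,n) <= A, i.e. min_{w in [k]^n} LT(w) <= A. *)
Definition LT_le (k n A : nat) : Prop := exists w : word k n, LTw w <= A.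

Definition LCS (T : eqType) (s t : seq T) : nat :=
  \max_(m : (size s).-tuple bool | subseq (mask m s) t) size (mask m s).

Definition pword (k : nat) (p : {perm 'I_k}) : seq 'I_k := [seq p i | i <- enum 'I_k].

Definition maxLCS (k : nat) (P : {set {perm 'I_k}}) : nat :=
  \max_(pq : {perm 'I_k} * {perm 'I_k} | [&& pq.1 \in P, pq.2 \in P & pq.1 != pq.2])
     LCS (pword pq.1) (pword pq.2).

(* LCS_2(K, P_k) <= B, i.e. the min over K-element sets of permutations is <= B. *)
Definition LCS2_le (K k B : nat) : Prop :=
  exists P : {set {perm 'I_k}}, #|P| = K /\ maxLCS P <= B.

(* Main.v *)
Require Import Defs.
From mathcomp Require Import all_boot all_order all_fingroup.
From mathcomp Require Import zify.
From Stdlib Require Import Lia.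
Set Implicit Arguments. Unset Strict Implicit. Unset Printing Implicit Defensive.

Definition ltO (n : nat) : rel 'I_n := fun x y => x < y.

Lemma ltO_trans n : transitive (@ltO n).
Proof. move=> y x z; exact: ltn_trans. Qed.
Lemma ltO_irr n : irreflexive (@ltO n).
Proof. by move=> x; rewrite /ltO ltnn. Qed.

Lemma enum_filter (T : finType) (A : {pred T}) : enum A = [seq x <- enum T | x \in A].
Proof. by rewrite enumT /enum_mem. Qed.

Lemma enum_ord_sorted n : sorted (@ltO n) (enum 'I_n).
Proof.
have -> : @ltO n = relpre val ltn by [].
by rewrite -sorted_map val_enum_ord iota_ltn_sorted.
Qed.

Lemma enum_sorted n (S : {set 'I_n}) : sorted (@ltO n) (enum S).
Proof. rewrite enum_filter; apply: sorted_filter; [exact: ltO_trans | exact: enum_ord_sorted]. Qed.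

Lemma enum_set_sorted n (s : seq 'I_n) : sorted (@ltO n) s -> enum [set x in s] = s.
Proof.
move=> Hs; apply: (irr_sorted_eq (@ltO_trans n) (@ltO_irr n)) => //.
  exact: enum_sorted.
by move=> x; rewrite mem_enum inE.
Qed.

Lemma sorted_subseq_enum n (s : seq 'I_n) : sorted (@ltO n) s -> subseq s (enum 'I_n).
Proof. move=> Hs; rewrite -(enum_set_sorted Hs) (enum_filter [set x in s]); exact: filter_subseq. Qed.

Lemma card_sorted n (s : seq 'I_n) : sorted (@ltO n) s -> #|[set x in s]| = size s.
Proof.
move=> Hs; rewrite -(enum_set_sorted Hs) -cardE.
by rewrite (enum_set_sorted Hs).
Qed.

Lemma path_zip (S T : Type) (r1 : rel S) (r2 : rel T) x y s t :
  path r1 x s -> path r2 y t ->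
  path (fun p q => r1 p.1 q.1 && r2 p.2 q.2) (x, y) (zip s t).
Proof.
elim: s x y t => [|x' s IH] x y [|y' t] //= /andP[h1 h2] /andP[h3 h4].
by rewrite h1 h3 /=; apply: IH.
Qed.

Lemma sorted_zip (S T : Type) (r1 : rel S) (r2 : rel T) s t :
  sorted r1 s -> sorted r2 t ->
  sorted (fun p q => r1 p.1 q.1 && r2 p.2 q.2) (zip s t).
Proof. case: s t => [|x s] [|y t] //= ; exact: path_zip. Qed.

Lemma mem_zip12 (S T : eqType) (s : seq S) (t : seq T) p :
  p \in zip s t -> p.1 \in s /\ p.2 \in t.
Proof.
elim: s t => [|x s IH] [|y t] //=; rewrite inE => /orP[/eqP -> | /IH [h1 h2]].
  by rewrite !inE !eqxx.
by rewrite !inE h1 h2 !orbT.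
Qed.

Lemma map_zip_eq (S T : eqType) (U : Type) (f : S -> U) (g : T -> U) s t :
  map f s = map g t -> forall p, p \in zip s t -> f p.1 = g p.2.
Proof.
elim: s t => [|x s IH] [|y t] //= [e1 e2] p; rewrite inE => /orP[/eqP -> //|]; exact: IH.
Qed.

Lemma count_split (T : Type) (a : pred T) (g : T -> nat) (m : nat) (s : seq T) :
  all (fun p => g p < m) s ->
  count a s = \sum_(c < m) count (fun p => a p && (g p == c)) s.
Proof.
elim: s => [|x s IH] /=.
  by move=> _; rewrite big1.
move=> /andP[hx hs]; rewrite big_split /= -IH //; congr (_ + _).
rewrite (bigD1 (Ordinal hx)) //= eqxx andbT big1 ?addn0 //.
move=> i /negP hi; apply/eqP; rewrite eqb0; apply/negP => /andP[_ /eqP e].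
by apply: hi; apply/eqP/val_inj; rewrite /= e.
Qed.

Lemma LCS_ge (T : eqType) (c x y : seq T) :
  subseq c x -> subseq c y -> size c <= LCS x y.
Proof.
move=> /subseqP[m hm ->] hy.
have hm' : size m == size x by apply/eqP.
exact: (@leq_bigmax_cond _ (fun mm : (size x).-tuple bool => subseq (mask mm x) y)
  (fun mm => size (mask mm x)) (Tuple hm')).
Qed.

Section Blk.
Variable d : nat.
Hypothesis dpos : 0 < d.

Lemma divmod_inj (x y : nat) : x %/ d = y %/ d -> x %% d = y %% d -> x = y.
Proof. by move=> h1 h2; rewrite (divn_eq x d) (divn_eq y d) h1 h2. Qed.

Lemma lt_same_mod x y : x < y -> x %% d = y %% d -> x %/ d < y %/ d.
Proof.
move=> hxy hm; rewrite ltn_neqAle leq_div2r ?(ltnW hxy) // andbT.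
apply/eqP => hd; have := divmod_inj hd hm; move=> e; by rewrite e ltnn in hxy.
Qed.

Lemma lt_same_div x y : x < y -> x %/ d = y %/ d -> x %% d < y %% d.
Proof.
move=> hxy hd; move: hxy; rewrite {1}(divn_eq x d) {1}(divn_eq y d) hd ltn_add2l //.
Qed.
End Blk.

Lemma twins_of_seq K n (w : word K n) (s t : seq 'I_n) :
  sorted (@ltO n) s -> sorted (@ltO n) t ->
  (forall x, x \in s -> x \in t -> False) -> map w s = map w t ->
  size s <= LTw w.
Proof.
move=> hs ht hd he.
have htw : twins w [set x in s] [set x in t].
  apply/andP; split.
    apply/pred0P => x /=; rewrite !inE; apply/negP => /andP[h1 h2]; exact: hd h1 h2.
  by rewrite /subw !enum_set_sorted // he.
have := @leq_bigmax_cond _ (fun ST : {set 'I_n} * {set 'I_n} => twins w ST.1 ST.2)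
  (fun ST => #|ST.1|) ([set x in s], [set x in t]) htw.
by rewrite /= card_sorted.
Qed.

Lemma blk_lt k n (kp : 0 < k) (x : 'I_(k * n)) : x %/ k < n.
Proof. rewrite ltn_divLR //; have h := ltn_ord x; by rewrite (mulnC n k). Qed.

Definition blk k n (kp : 0 < k) (x : 'I_(k * n)) : 'I_n := Ordinal (blk_lt kp x).
Definition off k m (kp : 0 < k) (x : 'I_m) : 'I_k := Ordinal (ltn_pmod x kp).

Theorem lemma21 (k K A B n : nat) :
  LT_le K n A -> LCS2_le K k B ->
  LT_le k (k * n) ((2 * n - 1) * B + k * A).
Proof.
move=> [w0 hw0] [P [hK hP]].
case: (posnP k) => [k0 | kp].
  subst k.
  exists [ffun x : 'I_(0 * n) => cast_ord (mul0n n) x].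
  apply/bigmax_leqP => ST _.
  by apply: leq_trans (max_card _) _; rewrite card_ord mul0n.
pose f (j : 'I_K) : {perm 'I_k} := enum_val (cast_ord (esym hK) j).
have f_in j : f j \in P by exact: enum_valP.
have f_inj : injective f by move=> i j /enum_val_inj /cast_ord_inj.
pose u : word k (k * n) := [ffun x : 'I_(k * n) => f (w0 (blk kp x)) (off kp x)].
exists u.
apply/bigmax_leqP => [[S T]] /= /andP[hdis /eqP hsub].
rewrite cardE.
set s := enum S; set t := enum T.
have hst : map u s = map u t by exact: hsub.
have hsz : size s = size t by rewrite -(size_map u) hst size_map.
rewrite -(size1_zip (t := t)) ?hsz //.
set z := zip s t.
pose R := fun p q : 'I_(k * n) * 'I_(k * n) => ltO p.1 q.1 && ltO p.2 q.2.
have R_trans : transitive R.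
  move=> q p r /andP[h1 h2] /andP[h3 h4]; apply/andP; split;
    [exact: ltn_trans h1 h3 | exact: ltn_trans h2 h4].
have hzs : sorted R z by apply: sorted_zip; exact: enum_sorted.
have hz_eq : forall p, p \in z -> u p.1 = u p.2 by exact: map_zip_eq.
have hz_dis : forall p q, p \in z -> q \in z -> p.1 != q.2.
  move=> p q /mem_zip12 [hp _] /mem_zip12 [_ hq]; apply/eqP => e.
  move: hp hq; rewrite !mem_enum e => h1 h2.
  by move: hdis => /pred0P /(_ q.2); rewrite /= h1 h2.
pose E := fun p : 'I_(k * n) * 'I_(k * n) => w0 (blk kp p.1) == w0 (blk kp p.2).
rewrite -(count_predC E z) addnC.
apply: leq_add.
-
  rewrite (@count_split _ _ (fun p => blk kp p.1 + blk kp p.2) (2 * n - 1)); last first.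
    apply/allP => p _; have h1 := ltn_ord (blk kp p.1); have h2 := ltn_ord (blk kp p.2).
    move: (nat_of_ord (blk kp p.1)) (nat_of_ord (blk kp p.2)) h1 h2 => x y h1 h2; lia.
  apply: leq_trans (_ : \sum_(c < 2 * n - 1) B <= _); last by rewrite sum_nat_const card_ord.
  apply: leq_sum => c _.
  rewrite -size_filter.
  set z' := filter _ z.
  have hz'z : forall p, p \in z' -> p \in z by move=> p; rewrite mem_filter => /andP[].
  have hz'P : forall p, p \in z' -> ~~ E p /\ blk kp p.1 + blk kp p.2 = c.
    by move=> p; rewrite mem_filter => /andP[/andP[h1 /eqP h2] _].
  have hz's : sorted R z' by apply: sorted_filter.
  case ez: z' hz's => [|p0 r] hs0; first by [].
  have hsame : forall q, q \in z' -> blk kp q.1 = blk kp p0.1 /\ blk kp q.2 = blk kp p0.2.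
    move=> q hq.
    have hp0 : p0 \in z' by rewrite ez mem_head.
    move: (hq); rewrite ez inE => /orP[/eqP -> //|hqr].
    have := order_path_min R_trans hs0 => /allP /(_ q hqr) /andP[h1 h2].
    have l1 : blk kp p0.1 <= blk kp q.1 by apply: leq_div2r; exact: ltnW.
    have l2 : blk kp p0.2 <= blk kp q.2 by apply: leq_div2r; exact: ltnW.
    have [_ e1] := hz'P _ hq; have [_ e2] := hz'P _ hp0.
    split; apply/val_inj => /=; move: l1 l2 e1 e2 => /=; lia.
  rewrite -ez.
  set a := blk kp p0.1; set b := blk kp p0.2.
  have hp0 : p0 \in z' by rewrite ez mem_head.
  have hab : w0 a != w0 b by have [] := hz'P _ hp0.
  pose cc := map (fun q => u q.1) z'.
  have offsorted : forall g : 'I_(k * n) * 'I_(k * n) -> 'I_(k * n),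
      (forall p q, R p q -> ltO (g p) (g q)) -> (forall q, q \in z' -> blk kp (g q) = blk kp (g p0)) ->
      sorted (@ltO k) (map (fun q => off kp (g q)) z').
    move=> g hg hb; rewrite sorted_map.
    apply: (sub_in_sorted (P := mem z')) _ _ (_ : sorted R z'); last by rewrite ez.
    - move=> p q hp hq /hg hpq; rewrite /relpre /ltO /=.
      move: hpq; rewrite /ltO => hpq; apply: (@lt_same_div k _ _ hpq).
      have h1 := congr1 val (hb _ hp); have h2 := congr1 val (hb _ hq); simpl in h1, h2.
      by rewrite h1 h2.
    - by apply/allP.
  have hcc1 : cc = map (f (w0 a)) (map (fun q => off kp q.1) z').
    rewrite -map_comp; apply/eq_in_map => q hq /=.
    by rewrite /u ffunE; have [-> _] := hsame _ hq.
  have hcc2 : cc = map (f (w0 b)) (map (fun q => off kp q.2) z').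
    rewrite -map_comp; apply/eq_in_map => q hq /=.
    rewrite hz_eq; last exact: hz'z.
    by rewrite /u ffunE; have [_ ->] := hsame _ hq.
  have sub1 : subseq cc (pword (f (w0 a))).
    rewrite hcc1 /pword; apply: map_subseq; apply: sorted_subseq_enum.
    apply: (offsorted (fun q => q.1)); first by move=> p q /andP[].
    by move=> q hq; have [-> _] := hsame _ hq.
  have sub2 : subseq cc (pword (f (w0 b))).
    rewrite hcc2 /pword; apply: map_subseq; apply: sorted_subseq_enum.
    apply: (offsorted (fun q => q.2)); first by move=> p q /andP[].
    by move=> q hq; have [_ ->] := hsame _ hq.
  apply: leq_trans hP.
  have -> : size z' = size cc by rewrite size_map.
  apply: leq_trans (LCS_ge sub1 sub2) _.
  have hc : [&& f (w0 a) \in P, f (w0 b) \in P & f (w0 a) != f (w0 b)].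
    by rewrite !f_in (inj_eq f_inj).
  exact: (@leq_bigmax_cond _ (fun pq : {perm 'I_k} * {perm 'I_k} =>
      [&& pq.1 \in P, pq.2 \in P & pq.1 != pq.2])
    (fun pq => LCS (pword pq.1) (pword pq.2)) (f (w0 a), f (w0 b)) hc).
-
  rewrite (@count_split _ _ (fun p => off kp p.1) k); last first.
    by apply/allP => p _; exact: (ltn_ord (off kp p.1)).
  apply: leq_trans (_ : \sum_(o < k) A <= _); last by rewrite sum_nat_const card_ord.
  apply: leq_sum => o _.
  rewrite -size_filter.
  set z' := filter _ z.
  have hz'z : forall p, p \in z' -> p \in z by move=> p; rewrite mem_filter => /andP[].
  have hz'P : forall p, p \in z' -> w0 (blk kp p.1) = w0 (blk kp p.2) /\
       off kp p.1 = o :> nat /\ off kp p.2 = o :> nat.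
    move=> p hp; move: (hp); rewrite mem_filter => /andP[/andP[/eqP h1 /eqP h2] hpz].
    split=> //; split=> //.
    have := hz_eq _ hpz; rewrite /u !ffunE h1 => /perm_inj <-; exact: h2.
  have hz's : sorted R z' by apply: sorted_filter.
  apply: leq_trans hw0.
  rewrite -(size_map (fun p => blk kp p.1)).
  apply: (twins_of_seq (t := map (fun p => blk kp p.2) z')).
  - rewrite sorted_map; apply: (sub_in_sorted (P := mem z')) _ _ hz's; last by apply/allP.
    move=> p q hp hq /andP[h1 _]; rewrite /relpre /ltO /=.
    apply: (@lt_same_mod k _ _ h1).
    have [_ [h2 _]] := hz'P _ hp; have [_ [h3 _]] := hz'P _ hq; simpl in h2, h3; by rewrite h2 h3.
  - rewrite sorted_map; apply: (sub_in_sorted (P := mem z')) _ _ hz's; last by apply/allP.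
    move=> p q hp hq /andP[_ h1]; rewrite /relpre /ltO /=.
    apply: (@lt_same_mod k _ _ h1).
    have [_ [_ h2]] := hz'P _ hp; have [_ [_ h3]] := hz'P _ hq; simpl in h2, h3; by rewrite h2 h3.
  - move=> x /mapP [p hp ->] /mapP [q hq e].
    have : p.1 = q.2.
      apply/val_inj/(@divmod_inj k); first by have := congr1 val e.
      have [_ [h2 _]] := hz'P _ hp; have [_ [_ h3]] := hz'P _ hq; simpl in h2, h3; by rewrite h2 h3.
    by move/eqP; rewrite (negbTE (hz_dis _ _ (hz'z _ hp) (hz'z _ hq))).
  - rewrite -!map_comp; apply/eq_in_map => p hp /=; by have [] := hz'P _ hp.
Qed.
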